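(* A code $C\subseteq\mathbb{F}_q^n$ is degenerated if and only if $C^\perp$ is degenerated.
   Context: Codes are $\mathbb{F}_q$-linear subspaces of $\mathbb{F}_q^n$; $C^\perp$ is the dual with respect to $\langle\mathbf{u},\mathbf{v}\rangle=\sum_iu_iv_i$. The stabiliser of a code $H$ is $\mathrm{Stab}(H)=\{\mathbf{x}\in\mathbb{F}_q^n:\mathbf{x}*H\subseteq H\}$, where $*$ is the componentwise product. A code $H$ is degenerated if $\dim\mathrm{Stab}(H)>1$; equivalently (a known result), $H$ is a direct sum of nonzero subcodes with disjoint supports or every generator matrix of $H$ has a zero column. *)

(* Defs.v *)
(* Codes over a finite field F (= F_q) are F-subspaces
   ({vspace}) of the row space 'rV[F]_n = F^n. *)
From HB Require Import structures.
From mathcomp Require Import all_boot all_order all_algebra.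
Set Implicit Arguments. Unset Strict Implicit. Unset Printing Implicit Defensive.
Import GRing.Theory.
Local Open Scope ring_scope.

Section Codes.
Variables (F : finFieldType) (n : nat).

Definition dotv (u v : 'rV[F]_n) : F := \sum_(i < n) u 0 i * v 0 i.

Definition cmul (u v : 'rV[F]_n) : 'rV[F]_n := \row_(i < n) (u 0 i * v 0 i).

(* dual code C^perp = { x | <x,c> = 0 for all c in C } (as the span of
   this finite set, which is already a subspace) *)
Definition dual_code (C : {vspace 'rV[F]_n}) : {vspace 'rV[F]_n} :=
  <<[seq x <- enum 'rV[F]_n | [forall c : 'rV[F]_n, (c \in C) ==> (dotv x c == 0%R)]]>>%VS.

Definition stab (H : {vspace 'rV[F]_n}) : {vspace 'rV[F]_n} :=
  <<[seq x <- enum 'rV[F]_n | [forall c : 'rV[F]_n, (c \in H) ==> (cmul x c \in H)]]>>%VS.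

Definition degenerated (H : {vspace 'rV[F]_n}) : bool := (1 < \dim (stab H))%N.

End Codes.

(* Main.v *)
Require Import Defs.
From mathcomp Require Import all_boot all_order all_algebra.
Set Implicit Arguments. Unset Strict Implicit. Unset Printing Implicit Defensive.
Import GRing.Theory.
Local Open Scope ring_scope.

Section Aux.
Variables (F : finFieldType) (n : nat).
Implicit Types (C H : {vspace 'rV[F]_n}) (x y c d : 'rV[F]_n).

Lemma mem_span_filter (P : pred 'rV[F]_n) :
  P 0 -> (forall (a : F) u v, P u -> P v -> P (a *: u + v)) ->
  forall x, (x \in <<[seq y <- enum 'rV[F]_n | P y]>>%VS) = P x.
Proof.
move=> P0 PC x; apply/idP/idP => [|Px]; last first.
  by apply: memv_span; rewrite mem_filter Px mem_enum.
set s := [seq y <- _ | _] => /(coord_span (X := in_tuple s)) ->.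
apply: (big_ind P) => //.
  by move=> u v Pu Pv; have := PC 1 u v Pu Pv; rewrite scale1r.
move=> i _; have := PC (coord (in_tuple s) i x) s`_i 0.
rewrite addr0; apply => //.
have : s`_i \in s by apply: mem_nth; exact: ltn_ord.
by rewrite mem_filter => /andP[].
Qed.

Lemma dotvDl (a : F) (u v c : 'rV[F]_n) : dotv (a *: u + v) c = a * dotv u c + dotv v c.
Proof.
rewrite /dotv mulr_sumr -big_split /=; apply: eq_bigr => i _.
by rewrite !mxE mulrDl mulrA.
Qed.

Lemma dotvC (u v : 'rV[F]_n) : dotv u v = dotv v u :> F.
Proof. by rewrite /dotv; apply: eq_bigr => i _; rewrite mulrC. Qed.

Lemma mem_dual C x : (x \in dual_code C) = [forall c, (c \in C) ==> (dotv x c == 0)].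
Proof.
rewrite /dual_code mem_span_filter //.
  by apply/forallP => c; apply/implyP => _; rewrite /dotv big1 // => i _; rewrite mxE mul0r.
move=> a u v /forallP Hu /forallP Hv; apply/forallP => c; apply/implyP => Cc.
by rewrite dotvDl (eqP (implyP (Hu c) Cc)) (eqP (implyP (Hv c) Cc)) mulr0 addr0.
Qed.

Lemma mem_dualP C x : reflect (forall c, c \in C -> dotv x c = 0) (x \in dual_code C).
Proof.
rewrite mem_dual; apply: (iffP forallP) => H c; first by move=> Cc; apply/eqP/(implyP (H c)).
by apply/implyP => /H ->.
Qed.

Lemma cmulDl (a : F) (u v c : 'rV[F]_n) : cmul (a *: u + v) c = a *: cmul u c + cmul v c.
Proof. by apply/rowP => i; rewrite !mxE mulrDl mulrA. Qed.

Lemma mem_stab H x : (x \in stab H) = [forall c, (c \in H) ==> (cmul x c \in H)].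
Proof.
rewrite /stab mem_span_filter //.
  apply/forallP => c; apply/implyP => _.
  have -> : cmul 0 c = 0 by apply/rowP => i; rewrite !mxE mul0r.
  exact: mem0v.
move=> a u v /forallP Hu /forallP Hv; apply/forallP => c; apply/implyP => Cc.
rewrite cmulDl; apply: memvD; last exact: (implyP (Hv c) Cc).
by apply: memvZ; exact: (implyP (Hu c) Cc).
Qed.

Lemma mem_stabP H x : reflect (forall c, c \in H -> cmul x c \in H) (x \in stab H).
Proof.
rewrite mem_stab; apply: (iffP forallP) => Hy c; first by move=> Cc; apply/(implyP (Hy c)).
by apply/implyP => /Hy.
Qed.

Lemma dot_cmul x c d : dotv (cmul x d) c = dotv d (cmul x c).
Proof. by rewrite /dotv; apply: eq_bigr => i _; rewrite !mxE mulrA [x 0 i * _]mulrC. Qed.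

Definition Bmx C : 'M[F]_(#|{: 'rV[F]_n}|, n) :=
  \matrix_(i < #|{: 'rV[F]_n}|) (if enum_val i \in C then enum_val i else 0).

Lemma row_Bmx C i : row i (Bmx C) \in C.
Proof. rewrite rowK; case: ifP => // _; exact: mem0v. Qed.

Lemma sub_Bmx C y : (y <= Bmx C)%MS -> y \in C.
Proof.
case/submxP => u ->; rewrite mulmx_sum_row.
by apply: memv_suml => i _; apply: memvZ; apply: row_Bmx.
Qed.

Lemma mulmx_tr_entry (y : 'rV[F]_n) m (A : 'M[F]_(m, n)) j :
  (y *m A^T) 0 j = dotv y (row j A).
Proof. by rewrite !mxE /dotv; apply: eq_bigr => i _; rewrite !mxE. Qed.

Lemma double_dual C y : (forall d, d \in dual_code C -> dotv y d = 0) -> y \in C.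
Proof.
move=> Hy; set B := Bmx C; set K := kermx B^T.
have KB : K *m B^T = 0 by apply: mulmx_ker.
have rowK_dual i : row i K \in dual_code C.
  apply/mem_dualP => c Cc.
  have -> : c = row (enum_rank c) B by rewrite rowK enum_rankK Cc.
  rewrite -mulmx_tr_entry -row_mul KB.
  by rewrite !mxE.
have yK : (y <= kermx K^T)%MS.
  apply/sub_kermxP; apply/rowP => j; rewrite mulmx_tr_entry Hy // mxE //.
have BK : (B <= kermx K^T)%MS.
  by apply/sub_kermxP; rewrite -[B]trmxK -trmx_mul KB trmx0.
have KsB : (kermx K^T <= B)%MS.
  have := mxrank_leqif_sup BK; case=> _ <-.
  rewrite mxrank_ker mxrank_tr mxrank_ker mxrank_tr subKn //.
  exact: rank_leq_col.
apply: sub_Bmx; exact: submx_trans yK KsB.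
Qed.

Lemma stab_dual C : stab C = stab (dual_code C).
Proof.
apply/vspaceP => x; apply/mem_stabP/mem_stabP => Hx d Cd.
  apply/mem_dualP => c Cc; rewrite dot_cmul.
  by move/mem_dualP: Cd; apply; apply: Hx.
apply: double_dual => e De.
rewrite dotvC -dot_cmul.
by move/mem_dualP: (Hx e De); apply.
Qed.

End Aux.

Theorem lemma6p6 (F : finFieldType) (n : nat) (C : {vspace 'rV[F]_n}) :
  degenerated C <-> degenerated (dual_code C).
Proof. by rewrite /degenerated stab_dual. Qed.
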